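(* Let $q\in\mathbb{K}$ be a primitive $\ell$-th root of unity with $\ell>1$ odd. For every $d\ge1$, the quantum Koszul complex $0\to K^0_d\xrightarrow{\kappa}K^1_d\xrightarrow{\kappa}\cdots\xrightarrow{\kappa}K^d_d\to0$, with $K^i_d=S^i_q\otimes\Lambda^{d-i}_q$, is exact.
   Context: Quantum polynomial functors: for $q\in\mathbb{K}^\times$, $\mathcal{H}_d$ is the Hecke algebra with generators $T_1,\dots,T_{d-1}$, relations $T_iT_j=T_jT_i$ ($|i-j|>1$), $T_iT_{i+1}T_i=T_{i+1}T_iT_{i+1}$, $(T_i-q)(T_i+q^{-1})=0$, basis $T_w$. $V_n=\mathbb{K}^n$ with basis $e_1,\dots,e_n$; $T_i$ acts on $V_n^{\otimes d}$ by $R_n$ in positions $i,i+1$, where $R_n(e_i\otimes e_j)=e_j\otimes e_i$ ($i<j$), $q\,e_i\otimes e_i$ ($i=j$), $(q-q^{-1})e_i\otimes e_j+e_j\otimes e_i$ ($i>j$). $\mathcal{P}^d_q$ is the category of $\mathbb{K}$-linear functors from the category with objects $V_n^{\otimes d}$ and $\mathcal{H}_d$-linear maps to finite-dimensional vector spaces, with $(F\otimes G)(n)=F(n)\otimes G(n)$. $S^*_q(n)$: algebra generated by $e_1,\dots,e_n$ with $e_je_i=qe_ie_j$ ($i<j$); $\Lambda^*_q(n)$: generated with $e_j\wedge e_i=-q^{-1}e_i\wedge e_j$ ($i<j$), $e_i\wedge e_i=0$; degree parts give functors $S^d_q,\Lambda^d_q$ with products $\mu$. The action of $\sum_\sigma(-q^{-1})^{l(\sigma)}T_\sigma$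 over $(i,j)$-shuffles on $I^{\otimes i+j}$ descends to $\Delta^{(i,j)}:\Lambda^{i+j}_q\to\Lambda^i_q\otimes\Lambda^j_q$. The Koszul differential $\kappa:K^i_d\to K^{i+1}_d$ is $(\mu\otimes1)\circ(1\otimes\Delta^{(1,d-i-1)})$, identifying $\Lambda^1_q=S^1_q=I$. *)

(* Defs.v *)
From HB Require Import structures.
From mathcomp Require Import all_boot all_order all_algebra.
Set Implicit Arguments. Unset Strict Implicit. Unset Printing Implicit Defensive.
Import GRing.Theory.
Local Open Scope ring_scope.

(* Concrete model of the evaluations at V_n of the functors involved.
   V_n^{(x)d} has basis e_w = e_{w 0} (x) ... (x) e_{w (d-1)}, w : 'I_d -> 'I_n
   (positions and basis indices are 0-based). *)
Section Koszul.
Variables (K : fieldType) (q : K) (n d : nat).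

Definition tens := {ffun 'I_d -> 'I_n}.
Definition Vt := {ffun tens -> K^o}.

Definition ebase (w : tens) : Vt := [ffun u => (u == w)%:R].

Definition adj (p : nat) : option ('I_d * 'I_d) :=
  match (insub p : option 'I_d), (insub p.+1 : option 'I_d) with
  | Some i, Some j => Some (i, j)
  | _, _ => None
  end.

Definition swapw (i j : 'I_d) (w : tens) : tens := [ffun k => if k == i then w j else if k == j then w i else w k].

Definition Rbasis (p : nat) (w : tens) : Vt :=
  match adj p with
  | Some (i, j) =>
      if (w i < w j)%N then ebase (swapw i j w)
      else if w i == w j then q *: ebase w
      else (q - q^-1) *: ebase w + ebase (swapw i j w)
  | None => ebase w
  end.

(* the operator T_{p+1} on V_n^{(x)d}: R_n in positions p, p+1 *)
Definition Rat (p : nat) (v : Vt) : Vt := \sum_(w : tens) v w *: Rbasis p w.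

Fixpoint chain (i k : nat) (v : Vt) : Vt :=
  if k is k'.+1 then Rat i (chain i.+1 k' v) else v.

(* Lift to V_n^{(x)d} of kappa : K^i_d -> K^{i+1}_d: it is
   1_{V^{(x)i}} (x) sum over (1,d-i-1)-shuffles sigma of (-q^-1)^{l(sigma)} T_sigma
   acting on the last d-i factors (the shuffle of length k, moving the factor
   in Lambda-position k to the front, acts by T_1 T_2 ... T_k, T_k first),
   followed by the projection onto S^{i+1} (x) Lambda^{d-i-1}. *)
Definition kappa (i : nat) (v : Vt) : Vt :=
  \sum_(k < d - i) (- q^-1) ^+ k *: chain i k v.

(* relations of S^*_q: e_j e_i - q e_i e_j (i<j), in positions p, p+1 *)
Definition relS (p : nat) (w : tens) : Vt :=
  match adj p with
  | Some (i, j) => if (w i < w j)%N then ebase (swapw i j w) - q *: ebase w else 0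
  | None => 0
  end.

(* relations of Lambda^*_q: e_j/\e_i + q^-1 e_i/\e_j (i<j), e_i/\e_i *)
Definition relL (p : nat) (w : tens) : Vt :=
  match adj p with
  | Some (i, j) =>
      if (w i < w j)%N then ebase (swapw i j w) + q^-1 *: ebase w
      else if w i == w j then ebase w else 0
  | None => 0
  end.

(* Kernel of V^{(x)d} = V^{(x)i} (x) V^{(x)(d-i)} ->> S^i_q(n) (x) Lambda^{d-i}_q(n)
   = K^i_d(n): spanned by the S-relations inside the first i factors and the
   Lambda-relations inside the last d-i factors. *)
Definition Ucal (i : nat) : {vspace Vt} :=
  (<<[seq relS p w | p <- iota 0 i.-1, w <- enum tens]>>
   + <<[seq relL p w | p <- iota i (d - i).-1, w <- enum tens]>>)%VS.

Definition kappa_img (i : nat) : {vspace Vt} :=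
  <<[seq kappa i (ebase w) | w <- enum tens]>>%VS.

(* Exactness of the complex at K^i_d(n), expressed on representatives:
   ker (kappa : K^i -> K^{i+1}) = im (kappa : K^{i-1} -> K^i)  in K^i = V/Ucal i,
   with K^{-1} = K^{d+1} = 0. *)
Definition koszul_exact_at (i : nat) : Prop :=
  forall v : Vt,
    ((i < d)%N ==> (kappa i v \in Ucal i.+1)) =
    (v \in (if i is i'.+1 then kappa_img i' + Ucal i else Ucal i)%VS).

End Koszul.

(* Main.v *)
Require Import Defs.
From mathcomp Require Import all_boot all_order all_algebra.
From mathcomp Require Import zify ring.
Set Implicit Arguments. Unset Strict Implicit. Unset Printing Implicit Defensive.
Import GRing.Theory.
Local Open Scope ring_scope.

Section Main.
Variables (K : fieldType) (q : K) (n d : nat).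
Local Notation W := (tens n d).
Local Notation V := (Vt K n d).
Local Notation e := (@ebase K n d).
Local Notation R := (@Defs.Rat K q n d).

Definition L (w : W) (k : nat) : nat :=
  if (insub k : option 'I_d) is Some t then (w t : nat) else 0.

Lemma L_ord (w : W) (t : 'I_d) : L w t = w t.
Proof. by rewrite /L valK. Qed.

Lemma wext (w u : W) : (forall k, (k < d)%N -> L w k = L u k) -> w = u.
Proof. by move=> H; apply/ffunP => t; apply: ord_inj; rewrite -!L_ord H. Qed.

Definition mkw (w : W) (f : nat -> nat) : W := [ffun t : 'I_d => w (insubd t (f t))].

Lemma L_mkw w f k : (k < d)%N -> (f k < d)%N -> L (mkw w f) k = L w (f k).
Proof.
move=> hk hf; pose t := Ordinal hk.
rewrite -[k]/(nat_of_ord t) L_ord ffunE.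
by rewrite -[in RHS](insubdK t hf) L_ord.
Qed.

Definition bnd (f : nat -> nat) := forall k, (k < d)%N -> (f k < d)%N.

Lemma mkw_comp w f g : bnd f -> bnd g ->
  mkw (mkw w f) g = mkw w (fun k => f (g k)).
Proof.
move=> hf hg; apply: wext => k hk.
have hg' := hg k hk; have hf' := hf _ hg'.
by rewrite !L_mkw //; rewrite L_mkw.
Qed.

Lemma mkw_ext w f g : bnd f -> bnd g -> (forall k, (k < d)%N -> f k = g k) ->
  mkw w f = mkw w g.
Proof. move=> hf hg H; apply: wext => k hk; have h1 := hf k hk; have h2 := hg k hk; by rewrite !L_mkw // H. Qed.

Lemma mkw_id w f : bnd f -> (forall k, (k < d)%N -> f k = k) -> mkw w f = w.
Proof. move=> hf H; apply: wext => k hk; have h1 := hf k hk; by rewrite L_mkw // H. Qed.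

Definition tp (p k : nat) : nat := if k == p then p.+1 else if k == p.+1 then p else k.
Definition sw (p : nat) (w : W) : W := mkw w (tp p).

Lemma bnd_tp p : (p.+1 < d)%N -> bnd (tp p).
Proof. rewrite /bnd /tp => hp k hk; repeat case: ifP; lia. Qed.

Lemma L_sw p w k : (p.+1 < d)%N -> (k < d)%N -> L (sw p w) k = L w (tp p k).
Proof. by move=> hp hk; rewrite L_mkw //; apply: bnd_tp. Qed.

Lemma swK p w : (p.+1 < d)%N -> sw p (sw p w) = w.
Proof.
move=> hp; rewrite /sw mkw_comp; try exact: bnd_tp.
by apply: mkw_id => [k hk|k hk]; rewrite /tp; repeat case: ifP; lia.
Qed.

Lemma adjE p : (p.+1 < d)%N ->
  exists i j : 'I_d, adj d p = Some (i, j) /\ (i : nat) = p /\ (j : nat) = p.+1.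
Proof.
move=> hp; have hp0 : (p < d)%N by lia.
exists (Ordinal hp0), (Ordinal hp); split=> //.
by rewrite /adj !insubT.
Qed.

Lemma adjN p : (d <= p.+1)%N -> adj d p = None.
Proof.
move=> hp; rewrite /adj.
have -> : (insub p.+1 : option 'I_d) = None by case: insubP => // u hu; lia.
by case: insub.
Qed.

Lemma swapwE (i j : 'I_d) p w : (i : nat) = p -> (j : nat) = p.+1 -> swapw i j w = sw p w.
Proof.
move=> hi hj; apply: wext => k hk.
have hp := ltn_ord j; rewrite hj in hp.
rewrite L_sw //; pose t := Ordinal hk; rewrite -[k]/(nat_of_ord t) L_ord ffunE.
rewrite /tp; case: (eqVneq t i) => [->|ni]; first by rewrite hi eqxx -hj L_ord.
case: (eqVneq t j) => [->|nj]; first by rewrite hj (gtn_eqF (ltnSn p)) eqxx -hi L_ord.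
have -> : (nat_of_ord t == p) = false by apply/negbTE; apply: contra ni => /eqP h; apply/eqP/ord_inj; rewrite h hi.
have -> : (nat_of_ord t == p.+1) = false by apply/negbTE; apply: contra nj => /eqP h; apply/eqP/ord_inj; rewrite h hj.
by rewrite L_ord.
Qed.


Definition lin (f : V -> V) := forall (a : K) (x y : V), f (a *: x + y) = a *: f x + f y.

Section Lin.
Variable f : V -> V.
Hypothesis hf : lin f.
Lemma lin0 : f 0 = 0.
Proof. move: (hf 1 0 0). rewrite !scale1r !addr0. move=> h.
have : f 0 + f 0 - f 0 = f 0 - f 0 by rewrite -h.
by rewrite addrK subrr. Qed.
Lemma linD x y : f (x + y) = f x + f y.
Proof. by rewrite -{1}(scale1r x) hf scale1r. Qed.
Lemma linZ a x : f (a *: x) = a *: f x.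
Proof. by rewrite -[a *: x]addr0 hf lin0 addr0. Qed.
Lemma linN x : f (- x) = - f x.
Proof. by rewrite -scaleN1r linZ scaleN1r. Qed.
Lemma linB x y : f (x - y) = f x - f y.
Proof. by rewrite linD linN. Qed.
Lemma lin_sum (I : Type) (r : seq I) (P : pred I) (F : I -> V) :
  f (\sum_(i <- r | P i) F i) = \sum_(i <- r | P i) f (F i).
Proof. exact: (big_morph f linD lin0). Qed.
End Lin.

Lemma scK (a b : K) : a *: (b : K^o) = a * b. Proof. by []. Qed.

Lemma eE (w u : W) : (e w) u = (u == w)%:R.
Proof. by rewrite ffunE. Qed.

Lemma sum_pick (F : W -> K) (u : W) : \sum_(w : W) F w * (u == w)%:R = F u.
Proof.
rewrite (bigD1 u) //= eqxx mulr1 big1 ?addr0 // => w hw.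
by rewrite eq_sym (negbTE hw) mulr0.
Qed.

Lemma decomp (v : V) : v = \sum_(w : W) v w *: e w.
Proof.
apply/ffunP => u; rewrite sum_ffunE.
rewrite -[LHS](sum_pick v u); apply: eq_bigr => w _.
by rewrite ffunE eE.
Qed.

Lemma lin_decomp f v : lin f -> f v = \sum_(w : W) v w *: f (e w).
Proof. move=> hf; rewrite {1}(decomp v) lin_sum //; apply: eq_bigr => w _; exact: linZ. Qed.

Lemma lin_ext f g : lin f -> lin g -> (forall w, f (e w) = g (e w)) -> forall v, f v = g v.
Proof. by move=> hf hg H v; rewrite (lin_decomp v hf) (lin_decomp v hg); apply: eq_bigr => w _; rewrite H. Qed.

Lemma lin_comp f g : lin f -> lin g -> lin (fun x => f (g x)).
Proof. by move=> hf hg a x y; rewrite hg hf. Qed.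

Lemma lin_id : lin id. Proof. by []. Qed.

Lemma lin_add f g : lin f -> lin g -> lin (fun x => f x + g x).
Proof. move=> hf hg a x y; rewrite hf hg scalerDr; rewrite -!addrA; congr (_ + _); rewrite addrC -addrA; congr (_ + _); exact: addrC. Qed.

Lemma lin_scale f (b : K) : lin f -> lin (fun x => b *: f x).
Proof. by move=> hf a x y; rewrite hf scalerDr !scalerA mulrC. Qed.

Definition al (x y : nat) : K := if (x < y)%N then 0 else if (y < x)%N then q - q^-1 else q.
Definition bb (x y : nat) : K := if x == y then 0 else 1.

Lemma bbC x y : bb x y = bb y x.
Proof. by rewrite /bb eq_sym. Qed.

Lemma Rbasis_eq p w : (p.+1 < d)%N ->
  Rbasis q p w = al (L w p) (L w p.+1) *: e w + bb (L w p) (L w p.+1) *: e (sw p w).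
Proof.
move=> hp; have [i [j [hadj [hi hj]]]] := adjE hp.
rewrite /Rbasis hadj (swapwE w hi hj).
have E1 : (w i < w j)%N = (L w p < L w p.+1)%N by rewrite -hj -hi !L_ord.
have E2 : (w i == w j) = (L w p == L w p.+1) by rewrite -hj -hi !L_ord.
rewrite E1 E2 /al /bb.
case: ltngtP => h.
- by rewrite scale0r add0r scale1r.
- by rewrite scale1r.
- by rewrite scale0r addr0.
Qed.

Lemma Rbasis_big p w : (d <= p.+1)%N -> Rbasis q p w = e w.
Proof. by move=> hp; rewrite /Rbasis adjN. Qed.

Lemma R_lin p : lin (R p).
Proof.
move=> a x y; rewrite /Defs.Rat scaler_sumr -big_split /=; apply: eq_bigr => w _.
by rewrite !ffunE scalerDl scalerA.
Qed.

Lemma R_e p w : R p (e w) = Rbasis q p w.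
Proof.
rewrite /Defs.Rat (bigD1 w) //= eE eqxx scale1r big1 ?addr0 // => u hu.
by rewrite eE (negbTE hu) scale0r.
Qed.

Lemma R_big p v : (d <= p.+1)%N -> R p v = v.
Proof.
move=> hp; rewrite [RHS]decomp /Defs.Rat; apply: eq_bigr => w _.
by rewrite Rbasis_big.
Qed.

Lemma R_pt p (v : V) u : (p.+1 < d)%N ->
  (R p v) u = al (L u p) (L u p.+1) * v u + bb (L u p) (L u p.+1) * v (sw p u).
Proof.
move=> hp; rewrite /Defs.Rat sum_ffunE.
under eq_bigr => w _ do rewrite ffunE Rbasis_eq // !ffunE !scK mulrDr !mulrA.
rewrite big_split /= sum_pick mulrC; congr (_ + _).
have -> : \sum_(w : W) v w * bb (L w p) (L w p.+1) * (u == sw p w)%:R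
        = \sum_(w : W) v w * bb (L w p) (L w p.+1) * (sw p u == w)%:R.
  apply: eq_bigr => w _.
  have -> : (u == sw p w) = (sw p u == w); last by [].
  by apply/eqP/eqP => H; [rewrite H swK | rewrite -H swK].
rewrite (sum_pick (fun w => v w * bb (L w p) (L w p.+1))) !L_sw //; try lia.
by rewrite /tp eqxx (gtn_eqF (ltnSn p)) eqxx bbC mulrC.
Qed.


Lemma L_swa p w : (p.+1 < d)%N -> L (sw p w) p = L w p.+1.
Proof. move=> hp; have hp0 : (p < d)%N by lia. by rewrite L_sw // /tp eqxx. Qed.
Lemma L_swb p w : (p.+1 < d)%N -> L (sw p w) p.+1 = L w p.
Proof. by move=> hp; rewrite L_sw // /tp (gtn_eqF (ltnSn p)) eqxx. Qed.
Lemma L_swc p w k : (p.+1 < d)%N -> (k < d)%N -> k != p -> k != p.+1 -> L (sw p w) k = L w k.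
Proof. by move=> hp hk h1 h2; rewrite L_sw // /tp (negbTE h1) (negbTE h2). Qed.

Lemma sw_comm p p' w : (p.+2 <= p')%N -> (p'.+1 < d)%N -> sw p (sw p' w) = sw p' (sw p w).
Proof.
move=> h1 h2; have h3 : (p.+1 < d)%N by lia.
rewrite /sw !mkw_comp; try exact: bnd_tp.
by apply: mkw_ext => [k hk|k hk|k hk]; rewrite /tp; repeat case: ifP; lia.
Qed.

Lemma sw_braid p w : (p.+2 < d)%N -> sw p (sw p.+1 (sw p w)) = sw p.+1 (sw p (sw p.+1 w)).
Proof.
move=> h1; have h3 : (p.+1 < d)%N by lia.
rewrite /sw !mkw_comp; try exact: bnd_tp; try (move=> k hk; rewrite /tp; repeat case: ifP; lia).
by apply: mkw_ext => [k hk|k hk|k hk]; rewrite /tp; repeat case: ifP; lia.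
Qed.

Section Q.
Hypothesis qnz : q != 0.

Lemma hecke p v : (p.+1 < d)%N -> R p (R p v) = (q - q^-1) *: R p v + v.
Proof.
move=> hp; apply/ffunP => u.
rewrite !R_pt // !ffunE !scK !R_pt // swK // (L_swa _ hp) (L_swb _ hp).
rewrite /al /bb; case: ltngtP => h; field; exact: qnz.
Qed.

Lemma R_comm p p' v : (p.+2 <= p')%N -> R p (R p' v) = R p' (R p v).
Proof.
move=> hpp; case: (ltnP p'.+1 d) => hp'; last by rewrite !(R_big _ hp').
have hp : (p.+1 < d)%N by lia.
apply/ffunP => u; rewrite !R_pt //.
rewrite (sw_comm _ hpp hp').
rewrite (L_swc _ hp') ?(L_swc _ hp') ?(L_swc _ hp) ?(L_swc _ hp); try lia.
ring.
Qed.

Lemma R_braid p v : (p.+2 < d)%N -> R p (R p.+1 (R p v)) = R p.+1 (R p (R p.+1 v)).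
Proof.
move=> hp1; have hp0 : (p.+1 < d)%N by lia.
have a0 : forall w, L (sw p w) p = L w p.+1 := fun w => L_swa w hp0.
have b0 : forall w, L (sw p w) p.+1 = L w p := fun w => L_swb w hp0.
have a1 : forall w, L (sw p.+1 w) p.+1 = L w p.+2 := fun w => L_swa w hp1.
have b1 : forall w, L (sw p.+1 w) p.+2 = L w p.+1 := fun w => L_swb w hp1.
have c0 : forall w, L (sw p w) p.+2 = L w p.+2 by move=> w; apply: L_swc; lia.
have c1 : forall w, L (sw p.+1 w) p = L w p by move=> w; apply: L_swc; lia.
apply/ffunP => u.
do 3 rewrite ?(R_pt _ _ hp0) ?(R_pt _ _ hp1).
rewrite !swK // -(sw_braid _ hp1).
do 3 rewrite ?a0 ?b0 ?c0 ?a1 ?b1 ?c1.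
rewrite /al /bb.
case: (ltngtP (L u p) (L u p.+1)) => h1; case: (ltngtP (L u p.+1) (L u p.+2)) => h2;
  case: (ltngtP (L u p) (L u p.+2)) => h3; try (exfalso; lia); field; try exact: qnz; done.
Qed.



Local Notation chain := (@chain K q n d).
Local Notation kappa := (@kappa K q n d).

Lemma chain_lin i k : lin (chain i k).
Proof.
elim: k i => [|k IH] i; first by [].
exact: (lin_comp (R_lin i) (IH i.+1)).
Qed.

Lemma chainS i k v : chain i k.+1 v = R i (chain i.+1 k v).
Proof. by []. Qed.

Lemma chainSr i k v : chain i k.+1 v = chain i k (R (i + k) v).
Proof.
elim: k i => [|k IH] i; first by rewrite addn0.
have -> : chain i k.+2 v = R i (chain i.+1 k.+1 v) by [].
by rewrite IH addSnnS.
Qed.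

Lemma chain_comm i k x v : (x.+2 <= i)%N \/ (i + k < x)%N ->
  chain i k (R x v) = R x (chain i k v).
Proof.
elim: k i => [|k IH] i h; first by [].
rewrite !chainS IH; last by lia.
case: h => h; [rewrite (R_comm _ h) // | rewrite R_comm //; lia].
Qed.

Lemma braid_chain i k x v : (i <= x)%N -> (x.+2 <= i + k)%N -> (i + k < d)%N ->
  chain i k (R x v) = R x.+1 (chain i k v).
Proof.
elim: k i => [|k IH] i h1 h2 h3; first by lia.
case: (eqVneq x i) => [->|hx].
- case: k IH h2 h3 => [|k] IH h2 h3; first by lia.
  rewrite !chainS chain_comm; last by lia.
  by rewrite R_braid //; lia.
- rewrite !chainS IH; try lia.
  by rewrite R_comm //; lia.
Qed.

Lemma chain_swap b j k v : (k <= j)%N -> (b + j.+1 < d)%N ->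
  chain b j.+1 (chain b k v) = chain b.+1 k (chain b j.+1 v).
Proof.
elim: k b j v => [|k IH] b j v h1 h2; first by [].
case: j h1 h2 => [|j] h1 h2; first by lia.
rewrite (chainS b k v) braid_chain; try lia.
rewrite (chainS b j.+1) IH; try lia.
rewrite -chain_comm; last by lia.
by rewrite -chainS.
Qed.

Lemma kappaE i v : kappa i v = \sum_(0 <= k < d - i) (- q^-1) ^+ k *: chain i k v.
Proof. by rewrite /Defs.kappa big_mkord. Qed.

Lemma kappa_lin i : lin (kappa i).
Proof.
move=> a x y; rewrite !kappaE scaler_sumr -big_split /=; apply: eq_bigr => k _.
by rewrite (chain_lin i k) scalerDr !scalerA mulrC.
Qed.


Hypothesis qq : q + q^-1 != 0.
Local Notation U i := (Ucal q n d i).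

Lemma qq2 : q * q + 1 != 0.
Proof.
apply: contra qq => /eqP h; apply/eqP.
have -> : q + q^-1 = (q * q + 1) / q by field.
by rewrite h mul0r.
Qed.

Ltac vec := apply/ffunP => ?; rewrite !ffunE ?scK; (field; try exact: qnz; done).

Lemma relS_eq p (w : W) : (p.+1 < d)%N ->
  relS q p w = if (L w p < L w p.+1)%N then e (sw p w) - q *: e w else 0.
Proof.
move=> hp; have [i [j [hadj [hi hj]]]] := adjE hp.
rewrite /relS hadj (swapwE w hi hj).
have E1 : (w i < w j)%N = (L w p < L w p.+1)%N by rewrite -hj -hi !L_ord.
by rewrite E1.
Qed.

Lemma relS_big p (w : W) : (d <= p.+1)%N -> relS q p w = 0.
Proof. by move=> hp; rewrite /relS adjN. Qed.

Lemma relL_eq p (w : W) : (p.+1 < d)%N ->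
  relL q p w = if (L w p < L w p.+1)%N then e (sw p w) + q^-1 *: e w
               else if L w p == L w p.+1 then e w else 0.
Proof.
move=> hp; have [i [j [hadj [hi hj]]]] := adjE hp.
rewrite /relL hadj (swapwE w hi hj).
have E1 : (w i < w j)%N = (L w p < L w p.+1)%N by rewrite -hj -hi !L_ord.
have E2 : (w i == w j) = (L w p == L w p.+1) by rewrite -hj -hi !L_ord.
by rewrite E1 E2.
Qed.

Lemma memS p (w : W) i : (p.+2 <= i)%N -> relS q p w \in U i.
Proof.
move=> hp; apply: (subvP (addvSl _ _)); apply: memv_span.
apply/allpairsP; exists (p, w); split => //=; last by rewrite mem_enum.
by rewrite mem_iota; lia.
Qed.

Lemma memL p (w : W) i : (i <= p)%N -> (p.+2 <= d)%N -> relL q p w \in U i.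
Proof.
move=> h1 h2; apply: (subvP (addvSr _ _)); apply: memv_span.
apply/allpairsP; exists (p, w); split => //=; last by rewrite mem_enum.
by rewrite mem_iota; lia.
Qed.

Lemma span_lin (f : V -> V) (Y : {vspace V}) (s : seq V) : lin f ->
  (forall x, x \in s -> f x \in Y) -> forall z, z \in <<s>>%VS -> f z \in Y.
Proof.
move=> hf H z hz.
have := coord_span (X := in_tuple s) hz => ->.
rewrite lin_sum //; apply: memv_suml => i _; rewrite linZ //; apply: memvZ; apply: H.
by apply: mem_nth; exact: (ltn_ord i).
Qed.

Lemma Ugen (f : V -> V) (Y : {vspace V}) i : lin f ->
  (forall p (w : W), (p.+2 <= i)%N -> f (relS q p w) \in Y) ->
  (forall p (w : W), (i <= p)%N -> (p.+2 <= d)%N -> f (relL q p w) \in Y) ->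
  forall z, z \in U i -> f z \in Y.
Proof.
move=> hf HS HL z /memv_addP [z1 h1 [z2 h2 ->]]; rewrite linD //; apply: memvD.
- apply: (span_lin hf _ h1) => x /allpairsP [[p w] [/= hp _ ->]].
  by apply: HS; move: hp; rewrite mem_iota; lia.
- apply: (span_lin hf _ h2) => x /allpairsP [[p w] [/= hp _ ->]].
  by apply: HL; move: hp; rewrite mem_iota; lia.
Qed.

Lemma linS p : lin (fun x => R p x - q *: x).
Proof. move=> a x y; rewrite R_lin; vec. Qed.

Lemma linLL p : lin (fun x => R p x + q^-1 *: x).
Proof. move=> a x y; rewrite R_lin; vec. Qed.

Lemma memU_S i p x : (p.+1 < d)%N -> (p.+2 <= i)%N -> R p x - q *: x \in U i.
Proof.
move=> hp hi; rewrite (lin_decomp x (linS p)); apply: memv_suml => w _; apply: memvZ.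
rewrite R_e Rbasis_eq // /al /bb.
case: ltngtP => h.
- rewrite scale0r add0r scale1r.
  have -> : e (sw p w) - q *: e w = relS q p w by rewrite relS_eq // h.
  exact: memS.
- have -> : (q - q^-1) *: e w + 1 *: e (sw p w) - q *: e w = - q^-1 *: relS q p (sw p w).
    rewrite relS_eq // L_swa // L_swb // h swK //; vec.
  by apply: memvZ; apply: memS.
- by rewrite scale0r addr0 subrr mem0v.
Qed.

Lemma memU_L i p x : (i <= p)%N -> (p.+2 <= d)%N -> R p x + q^-1 *: x \in U i.
Proof.
move=> hi hp; have hp1 : (p.+1 < d)%N by lia.
rewrite (lin_decomp x (linLL p)); apply: memv_suml => w _; apply: memvZ.
rewrite R_e Rbasis_eq // /al /bb.
case: ltngtP => h.
- have -> : 0 *: e w + 1 *: e (sw p w) + q^-1 *: e w = relL q p w by rewrite relL_eq // h; vec.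
  exact: memL.
- have -> : (q - q^-1) *: e w + 1 *: e (sw p w) + q^-1 *: e w = q *: relL q p (sw p w).
    rewrite relL_eq // L_swa // L_swb // h swK //; vec.
  by apply: memvZ; apply: memL.
- have -> : q *: e w + 0 *: e (sw p w) + q^-1 *: e w = (q + q^-1) *: relL q p w.
    by rewrite relL_eq // h ltnn eqxx; vec.
  by apply: memvZ; apply: memL.
Qed.

Lemma Ugen_img (f : V -> V) (Y : {vspace V}) i : lin f ->
  (forall p x, (p.+1 < d)%N -> (p.+2 <= i)%N -> f (R p x - q *: x) \in Y) ->
  (forall p x, (i <= p)%N -> (p.+2 <= d)%N -> f (R p x + q^-1 *: x) \in Y) ->
  forall z, z \in U i -> f z \in Y.
Proof.
move=> hf HS HL; apply: Ugen => // p w.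
- move=> hi; case: (ltnP p.+1 d) => hp; last by rewrite relS_big // lin0 // mem0v.
  rewrite relS_eq //; case: ifP => h; last by rewrite lin0 // mem0v.
  have -> : e (sw p w) - q *: e w = R p (e w) - q *: e w.
    by rewrite R_e Rbasis_eq // /al /bb h (ltn_eqF h) scale0r add0r scale1r.
  exact: HS.
- move=> hi hp; have hp1 : (p.+1 < d)%N by lia.
  rewrite relL_eq //; case: ifP => h.
    have -> : e (sw p w) + q^-1 *: e w = R p (e w) + q^-1 *: e w.
      by rewrite R_e Rbasis_eq // /al /bb h (ltn_eqF h) scale0r add0r scale1r.
    exact: HL.
  case: ifP => h2; last by rewrite lin0 // mem0v.
  have -> : e w = (q + q^-1)^-1 *: (R p (e w) + q^-1 *: e w).
    rewrite R_e Rbasis_eq // /al /bb (eqP h2) ltnn eqxx; apply/ffunP => ?; rewrite !ffunE ?scK.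
    by field; rewrite qnz qq2.
  by rewrite linZ //; apply: memvZ; apply: HL.
Qed.


Lemma Reig p x : (p.+1 < d)%N -> R p (R p x + q^-1 *: x) = q *: (R p x + q^-1 *: x).
Proof.
move=> hp; rewrite (linD (R_lin p)) (linZ (R_lin p)) hecke //.
apply/ffunP => ?; rewrite !ffunE !scK; field; exact: qnz.
Qed.

Lemma kappa_R i p y : (p.+2 <= i)%N -> kappa i (R p y) = R p (kappa i y).
Proof.
move=> hp; rewrite !kappaE (lin_sum (R_lin p)); apply: eq_bigr => k _.
by rewrite (linZ (R_lin p)) chain_comm //; left.
Qed.

Lemma sum_nat_mem (F : nat -> V) (Y : {vspace V}) a b :
  (forall k, (a <= k < b)%N -> F k \in Y) -> \sum_(a <= k < b) F k \in Y.
Proof. by move=> H; rewrite big_nat_cond; apply: memv_suml => k /andP [hk _]; apply: H. Qed.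

Lemma W1 i z : (i < d)%N -> z \in U i -> kappa i z \in U i.+1.
Proof.
move=> hi; apply: (Ugen_img (kappa_lin i)) => p x.
- move=> hp1 hp2; rewrite (linB (kappa_lin i)) (linZ (kappa_lin i)) kappa_R //.
  by apply: memU_S => //; lia.
- move=> h1 h2; set y := R p x + q^-1 *: x.
  rewrite kappaE; set m := (d - i)%N; set r := (p - i)%N.
  have hr : (r.+1 < m)%N by rewrite /r /m; lia.
  rewrite (@big_cat_nat _ _ _ r) //=; last by lia.
  rewrite (@big_ltn _ _ _ r) //; last by lia.
  rewrite (@big_ltn _ _ _ r.+1) // [X in _ + X]addrA.
  apply: memvD; last apply: memvD.
  + apply: sum_nat_mem => k hk; apply: memvZ.
    rewrite /y (linD (chain_lin i k)) (linZ (chain_lin i k)) chain_comm; last by right; lia.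
    by apply: memU_L; lia.
  + have -> : (- q^-1) ^+ r *: chain i r y + (- q^-1) ^+ r.+1 *: chain i r.+1 y = 0.
      rewrite chainSr (_ : (i + r = p)%N); last by rewrite /r; lia.
      rewrite /y Reig; last by lia.
      rewrite (linZ (chain_lin i r)) scalerA -scalerDl exprS.
      have -> : (- q^-1) ^+ r + - q^-1 * (- q^-1) ^+ r * q = 0 by field.
      by rewrite scale0r.
    exact: mem0v.
  + apply: sum_nat_mem => k hk; apply: memvZ.
    rewrite /y (linD (chain_lin i k)) (linZ (chain_lin i k)) braid_chain; try lia.
    by apply: memU_L; lia.
Qed.


Lemma reindex (F : nat -> nat -> V) m :
  \sum_(0 <= k < m.+1) \sum_(0 <= j < m) F j k =
  \sum_(0 <= j < m) \sum_(0 <= k < j.+1) (F j k + F k j.+1).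
Proof.
elim: m => [|m IH]; first by rewrite [RHS]big_geq // big1 // => k _; rewrite big_geq.
have e1 : \sum_(0 <= k < m.+2) \sum_(0 <= j < m.+1) F j k =
    \sum_(0 <= k < m.+2) \sum_(0 <= j < m) F j k + \sum_(0 <= k < m.+2) F m k.
  by rewrite -big_split; apply: eq_bigr => k _; rewrite big_nat_recr.
have e2 : \sum_(0 <= k < m.+2) \sum_(0 <= j < m) F j k =
    \sum_(0 <= k < m.+1) \sum_(0 <= j < m) F j k + \sum_(0 <= j < m) F j m.+1.
  by rewrite big_nat_recr.
have e3 : \sum_(0 <= k < m.+2) F m k = \sum_(0 <= k < m.+1) F m k + F m m.+1.
  by rewrite big_nat_recr.
have e4 : \sum_(0 <= k < m.+1) (F m k + F k m.+1) =
    \sum_(0 <= k < m.+1) F m k + (\sum_(0 <= k < m) F k m.+1 + F m m.+1).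
  by rewrite big_split /= [X in _ + X]big_nat_recr.
rewrite e1 e2 e3 [RHS]big_nat_recr //= e4 IH.
rewrite -!addrA; congr (_ + _).
exact: addrCA.
Qed.

Lemma W2 i v : (0 < i)%N -> (i < d)%N -> kappa i (kappa i.-1 v) \in U i.+1.
Proof.
case: i => [//|a] _ hi /=.
set m := (d - a.+1)%N.
have hm : (d - a = m.+1)%N by rewrite /m; lia.
rewrite [kappa a v]kappaE hm (lin_sum (kappa_lin a.+1)).
under eq_bigr => k _ do rewrite (linZ (kappa_lin a.+1)) kappaE -/m scaler_sumr.
under eq_bigr => k _ do under eq_bigr => j _ do rewrite scalerA.
rewrite (reindex (fun j k => ((- q^-1) ^+ k * (- q^-1) ^+ j) *: chain a.+1 j (chain a k v))).
apply: sum_nat_mem => j hj; apply: sum_nat_mem => k hk.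
have -> : chain a.+1 k (chain a j.+1 v) = R a (chain a.+1 j (chain a k v)).
  by rewrite -chain_swap //; lia.
set P := chain a.+1 j (chain a k v).
have -> : (- q^-1) ^+ k * (- q^-1) ^+ j *: P + (- q^-1) ^+ j.+1 * (- q^-1) ^+ k *: R a P
   = (- q^-1 * ((- q^-1) ^+ k * (- q^-1) ^+ j)) *: (R a P - q *: P).
  rewrite exprS; apply/ffunP => ?; rewrite !ffunE !scK; field; exact: qnz.
by apply: memvZ; apply: memU_S; lia.
Qed.


Definition mvf (a b k : nat) : nat :=
  if (k < a)%N || (b < k)%N then k else if k == b then a else k.+1.
Definition M (w : W) (a b : nat) : W := mkw w (mvf a b).
Definition rtf (i k t : nat) : nat :=
  if (t < i)%N || (i + k < t)%N then t else if t == i then (i + k)%N else t.-1.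
Definition rot (i k : nat) (u : W) : W := mkw u (rtf i k).

Ltac natif := rewrite /tp /mvf /rtf; repeat case: ifP; lia.

Lemma bnd_mvf a b : (a <= b)%N -> (b < d)%N -> bnd (mvf a b).
Proof. move=> h1 h2 k hk; natif. Qed.
Lemma bnd_rtf i k : (i + k < d)%N -> bnd (rtf i k).
Proof. move=> h t ht; natif. Qed.

Lemma rot0 i u : (i < d)%N -> rot i 0 u = u.
Proof. move=> hi; apply: mkw_id => [|t ht]; [apply: bnd_rtf; lia | natif]. Qed.

Lemma sw_rot i k u : (i + k.+1 < d)%N -> sw i (rot i.+1 k u) = rot i k.+1 u.
Proof.
move=> h; rewrite /sw /rot mkw_comp; [|apply: bnd_rtf; lia|apply: bnd_tp; lia].
apply: mkw_ext => [t ht|t ht|t ht]; natif.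
Qed.

Lemma M_id u a : (a < d)%N -> M u a a = u.
Proof. move=> h; apply: mkw_id => [|t ht]; [apply: bnd_mvf; lia | natif]. Qed.

Lemma M_sw u a b : (a < b)%N -> (b < d)%N -> M (sw a u) a.+1 b = M u a b.
Proof.
move=> h1 h2; rewrite /sw /M mkw_comp; [|apply: bnd_tp; lia|apply: bnd_mvf; lia].
apply: mkw_ext => [t ht|t ht|t ht]; natif.
Qed.

Lemma M_rot u a i k : (a <= i)%N -> (i.+1 + k < d)%N ->
  M (rot i.+1 k u) a i.+1 = rot i k.+1 (M u a i).
Proof.
move=> h1 h2; rewrite /M /rot !mkw_comp; try (apply: bnd_rtf; lia); try (apply: bnd_mvf; lia).
apply: mkw_ext => [t ht|t ht|t ht]; natif.
Qed.

Lemma M_sw_hi w p a b : (p.+1 < a)%N -> (a <= b)%N -> (b < d)%N ->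
  M (sw p w) a b = sw p (M w a b).
Proof.
move=> h1 h2 h3; rewrite /M /sw !mkw_comp; try (apply: bnd_tp; lia); try (apply: bnd_mvf; lia).
apply: mkw_ext => [t ht|t ht|t ht]; natif.
Qed.

Lemma M_sw_lo w p a b : (a <= b)%N -> (b < p)%N -> (p.+1 < d)%N ->
  M (sw p w) a b = sw p (M w a b).
Proof.
move=> h1 h2 h3; rewrite /M /sw !mkw_comp; try (apply: bnd_tp; lia); try (apply: bnd_mvf; lia).
apply: mkw_ext => [t ht|t ht|t ht]; natif.
Qed.

Lemma M_sw_mid w p a b : (a <= p)%N -> (p.+2 <= b)%N -> (b < d)%N ->
  M (sw p.+1 w) a b = sw p (M w a b).
Proof.
move=> h1 h2 h3; rewrite /M /sw !mkw_comp; try (apply: bnd_tp; lia); try (apply: bnd_mvf; lia).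
apply: mkw_ext => [t ht|t ht|t ht]; natif.
Qed.

Lemma L_M w a b k : (a <= b)%N -> (b < d)%N -> (k < d)%N -> L (M w a b) k = L w (mvf a b k).
Proof. by move=> h1 h2 h3; rewrite L_mkw //; apply: bnd_mvf. Qed.

Lemma L_rot u i k t : (i + k < d)%N -> (t < d)%N -> L (rot i k u) t = L u (rtf i k t).
Proof. by move=> h1 h2; rewrite L_mkw //; apply: bnd_rtf. Qed.


Hypothesis d0 : (0 < d)%N.

Lemma L_lt w k : (k < d)%N -> (L w k < n)%N.
Proof. by move=> hk; rewrite -[k]/(nat_of_ord (Ordinal hk)) L_ord. Qed.

Definition mn (w : W) : nat := foldr minn n [seq L w k | k <- iota 0 d].

Lemma foldr_min_le (s : seq nat) x : x \in s -> (foldr minn n s <= x)%N.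
Proof.
elim: s => [//|y s IH]; rewrite in_cons /= => /orP [/eqP ->|hx]; first exact: geq_minl.
by apply: leq_trans (geq_minr _ _) (IH hx).
Qed.

Lemma foldr_min_mem (s : seq nat) : foldr minn n s = n \/ foldr minn n s \in s.
Proof.
elim: s => [|y s IH] /=; first by left.
rewrite /minn; case: ifP => _; first by right; rewrite mem_head.
by case: IH => [->|h]; [left | right; rewrite in_cons h orbT].
Qed.

Lemma mn_le w k : (k < d)%N -> (mn w <= L w k)%N.
Proof. by move=> hk; apply: foldr_min_le; apply: map_f; rewrite mem_iota. Qed.

Lemma mn_ex w : exists2 k, (k < d)%N & L w k = mn w.
Proof.
have h0 := mn_le w d0; have h1 := L_lt w d0.
case: (foldr_min_mem [seq L w k | k <- iota 0 d]) => h; first by rewrite -/(mn w) in h; lia.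
move/mapP: h => [k hk hkE]; exists k; last by rewrite /mn hkE.
by move: hk; rewrite mem_iota; lia.
Qed.

Lemma mn_mkw w f : bnd f -> (forall k, (k < d)%N -> exists2 k', (k' < d)%N & f k' = k) ->
  mn (mkw w f) = mn w.
Proof.
move=> hf hs; apply/eqP; rewrite eqn_leq; apply/andP; split.
- have [k0 hk0 e0] := mn_ex w; have [k' hk' e'] := hs k0 hk0.
  by rewrite -e0 -e' -(L_mkw w (f:=f) hk' (hf _ hk')); apply: mn_le.
- have [k1 hk1 <-] := mn_ex (mkw w f); have hf1 := hf _ hk1.
  by rewrite L_mkw //; apply: mn_le.
Qed.

Lemma mn_sw p w : (p.+1 < d)%N -> mn (sw p w) = mn w.
Proof.
move=> hp; apply: mn_mkw; first exact: bnd_tp.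
move=> k hk; exists (tp p k); first exact: bnd_tp.
rewrite /tp; repeat case: ifP; lia.
Qed.

Lemma mn_rot i k u : (i + k < d)%N -> mn (rot i k u) = mn u.
Proof.
move=> h; apply: mn_mkw; first exact: bnd_rtf.
move=> t ht; exists (if (t < i)%N || (i + k < t)%N then t else if t == (i + k)%N then i else t.+1).
  by repeat case: ifP; lia.
natif.
Qed.

Definition inL (j : nat) (w : W) : bool := has (fun k => L w k == mn w) (iota j (d - j)).

Lemma inLP j w : reflect (exists2 k, (j <= k < d)%N & L w k = mn w) (inL j w).
Proof.
apply: (iffP hasP) => [[k hk /eqP e]|[k hk e]]; exists k => //.
- by move: hk; rewrite mem_iota; lia.
- by rewrite mem_iota; lia.
- by rewrite e.
Qed.

Fixpoint lastpos (w : W) (s j : nat) : nat :=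
  if j is j'.+1 then (if L w j' == s then j' else lastpos w s j') else 0.

Lemma lastpos_spec w s j : (exists2 k, (k < j)%N & L w k = s) ->
  [/\ (lastpos w s j < j)%N, L w (lastpos w s j) = s &
      forall t, (lastpos w s j < t < j)%N -> L w t != s].
Proof.
elim: j => [[k //]|j IH] [k hk e] /=.
case: (eqVneq (L w j) s) => [hj|hj].
  by split => // t ht; lia.
have hkj : (k < j)%N by move: hk; rewrite ltnS leq_eqVlt => /orP [/eqP ekj|//]; rewrite -ekj e eqxx in hj.
have [h1 h2 h3] := IH (ex_intro2 _ _ k hkj e).
split => //; first by lia.
move=> t ht; case: (eqVneq t j) => [->//|htj]; apply: h3; lia.
Qed.

Lemma lastpos_eq w s j a : (a < j)%N -> L w a = s ->
  (forall t, (a < t < j)%N -> L w t != s) -> lastpos w s j = a.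
Proof.
elim: j => [//|j IH] h1 h2 h3 /=.
case: (eqVneq (L w j) s) => [hj|hj].
  case: (ltnP a j) => ha; last by lia.
  by move: (h3 j); rewrite hj eqxx ha ltnSn => /(_ isT).
have ha : a != j by apply: contraNneq hj => <-; rewrite h2.
apply: IH => //; first by lia.
by move=> t ht; apply: h3; lia.
Qed.

Definition pos (j : nat) (w : W) : nat := lastpos w (mn w) j.

Definition Hb (j : nat) (w : W) : V :=
  if inL j w then 0 else (q^-1) ^+ (j.-1 - pos j w) *: e (M w (pos j w) j.-1).
Definition H (j : nat) (v : V) : V := \sum_(w : W) v w *: Hb j w.

Lemma H_lin j : lin (H j).
Proof.
move=> a x y; rewrite /H scaler_sumr -big_split /=; apply: eq_bigr => w _.
by rewrite !ffunE scalerDl scalerA.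
Qed.

Lemma H_e j w : H j (e w) = Hb j w.
Proof.
rewrite /H (bigD1 w) //= eE eqxx scale1r big1 ?addr0 // => u hu.
by rewrite eE (negbTE hu) scale0r.
Qed.

Definition incr (i : nat) (u : W) := forall a b, (i <= a)%N -> (a < b)%N -> (b < d)%N -> (L u a < L u b)%N.

Lemma chain_inc i k u : (i + k < d)%N -> incr i u -> chain i k (e u) = e (rot i k u).
Proof.
elim: k i => [|k IH] i h hu; first by rewrite rot0 //; lia.
have IH' : chain i.+1 k (e u) = e (rot i.+1 k u).
  by apply: IH; [lia | move=> a b h1 h2 h3; apply: hu; lia].
rewrite chainS IH'.
have hi : (i.+1 < d)%N by lia.
rewrite R_e Rbasis_eq // !L_rot //; try lia.
have E1 : rtf i.+1 k i = i by natif.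
have E2 : rtf i.+1 k i.+1 = (i.+1 + k)%N by natif.
rewrite E1 E2.
have hlt : (L u i < L u (i.+1 + k))%N by apply: hu; lia.
rewrite /al /bb hlt (ltn_eqF hlt) scale0r add0r scale1r sw_rot //; lia.
Qed.

Lemma kappa_inc i u : incr i u ->
  kappa i (e u) = \sum_(0 <= k < d - i) (- q^-1) ^+ k *: e (rot i k u).
Proof.
move=> hu; rewrite kappaE big_nat_cond [RHS]big_nat_cond; apply: eq_bigr => k /andP [hk _].
by rewrite chain_inc //; lia.
Qed.


Lemma move_S i u a b : (a <= b)%N -> (b < i)%N -> (i <= d)%N ->
  (forall t, (a < t <= b)%N -> (L u a < L u t)%N) ->
  e u - (q^-1) ^+ (b - a) *: e (M u a b) \in U i.
Proof.
move=> hab hbi hid ht0; move Hm: (b - a)%N => m.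
elim: m u a hab Hm ht0 => [|m IH] u a hab hm ht.
  have -> : a = b by lia.
  by rewrite M_id ?expr0 ?scale1r ?subrr ?mem0v //; lia.
have hp : (a.+1 < d)%N by lia.
set u' := sw a u.
have hlt : (L u a < L u a.+1)%N by apply: ht; lia.
have hrel : e u' - q *: e u \in U i by rewrite /u' -[X in X \in _](_ : relS q a u = _) ?memS //; [lia | rewrite relS_eq // hlt].
have IH' : e u' - (q^-1) ^+ m *: e (M u' a.+1 b) \in U i.
  apply: IH; try lia.
  move=> t htt; rewrite /u' L_swb // L_swc //; try lia.
  by apply: ht; lia.
have hab' : (a < b)%N by lia.
have hbd : (b < d)%N by lia.
rewrite /u' M_sw // in IH'.
have -> : e u - (q^-1) ^+ m.+1 *: e (M u a b)
   = q^-1 *: (e (sw a u) - (q^-1) ^+ m *: e (M u a b)) - q^-1 *: (e u' - q *: e u).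
  rewrite exprS; vec.
by apply: memvB; apply: memvZ.
Qed.

Lemma lastpos_ext w w' s j : (forall t, (t < j)%N -> L w t = L w' t) ->
  lastpos w s j = lastpos w' s j.
Proof.
elim: j => [//|j IH] H /=; rewrite H // IH // => t ht; apply: H; lia.
Qed.

Lemma notinL_ex j w : ~~ inL j w -> exists2 k, (k < j)%N & L w k = mn w.
Proof.
move=> h; have [k hk ek] := mn_ex w; exists k => //.
case: (ltnP k j) => // hkj; case/inLP: h; exists k => //; lia.
Qed.

Lemma pos_spec j w : ~~ inL j w ->
  [/\ (pos j w < j)%N, L w (pos j w) = mn w &
      forall t, (pos j w < t < j)%N -> L w t != mn w].
Proof. by move=> h; apply: lastpos_spec; apply: notinL_ex. Qed.

Lemma notinL_gt j w t : ~~ inL j w -> (j <= t)%N -> (t < d)%N -> (mn w < L w t)%N.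
Proof.
move=> h h1 h2; rewrite ltn_neqAle mn_le // andbT; apply/eqP => E.
by case/inLP: h; exists t => //; apply/andP.
Qed.

Lemma H1 j z : (0 < j)%N -> (j <= d)%N -> z \in U j -> H j z \in U j.-1.
Proof.
move=> hj0 hjd; apply: (Ugen (H_lin j)) => p w.
-
  move=> hp; have hp1 : (p.+1 < d)%N by lia.
  rewrite relS_eq //; case: ifP => hlt; last by rewrite lin0 ?mem0v //; exact: H_lin.
  rewrite (linB (H_lin j)) (linZ (H_lin j)) !H_e /Hb.
  set w' := sw p w.
  have Emn : mn w' = mn w by rewrite mn_sw.
  have EinL : inL j w' = inL j w.
    rewrite /inL Emn; apply: eq_in_has => k; rewrite mem_iota => hk.
    by rewrite /w' L_swc //; lia.
  rewrite EinL; case: ifP => hin; first by rewrite scaler0 subrr mem0v.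
  have [ha1 ha2 ha3] := pos_spec (negbT hin).
  set a := pos j w in ha1 ha2 ha3 *.
  set s := mn w in ha2 ha3 Emn *.
  have hsp : (s <= L w p)%N by apply: mn_le; lia.
  have hsp1 : L w p.+1 != s by apply/eqP => E; move: hlt; rewrite E; lia.
  have hap : (p <= a)%N \/ (L w p != s).
    by case: (eqVneq (L w p) s) => h; [left; case: (ltnP a p) => // hap; move: (ha3 p); rewrite h eqxx; lia | right].
  case: (eqVneq (L w p) s) => hps.
  +
    have hpa : (p <= a)%N by case: hap => // /negP; rewrite hps eqxx.
    case: (eqVneq a p) => hap'.
    * have Ea' : pos j w' = p.+1.
        rewrite /pos Emn; apply: lastpos_eq; first by lia.
          by rewrite /w' L_swb.
        move=> t ht; rewrite /w' L_swc //; try lia.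
        by apply: ha3; lia.
      rewrite Ea' hap' /w' M_sw //; try lia.
      have -> : (j.-1 - p = (j.-1 - p.+1).+1)%N by lia.
      rewrite exprS.
      have -> : (q^-1) ^+ (j.-1 - p.+1) *: e (M w p j.-1) - q *: (q^-1 * (q^-1) ^+ (j.-1 - p.+1) *: e (M w p j.-1)) = 0 by vec.
      exact: mem0v.
    * have hpa2 : (p.+2 <= a)%N.
        have : a != p.+1 by apply: contraNneq hsp1 => <-; rewrite ha2.
        lia.
      have Ea' : pos j w' = a.
        rewrite /pos Emn; apply: lastpos_eq => //.
          by rewrite /w' L_swc //; lia.
        move=> t ht; rewrite /w' L_swc //; try lia.
        by apply: ha3.
      rewrite Ea' /w' M_sw_hi //; try lia.
      have -> : (q^-1) ^+ (j.-1 - a) *: e (sw p (M w a j.-1)) - q *: ((q^-1) ^+ (j.-1 - a) *: e (M w a j.-1))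
          = (q^-1) ^+ (j.-1 - a) *: relS q p (M w a j.-1).
        rewrite relS_eq // !L_M //; try lia.
        rewrite (_ : mvf a j.-1 p = p); last by natif.
        rewrite (_ : mvf a j.-1 p.+1 = p.+1); last by natif.
        rewrite hlt; vec.
      by apply: memvZ; apply: memS; lia.
  +
    have Ea' : pos j w' = a.
      rewrite /pos Emn; apply: lastpos_eq => //.
        rewrite /w' L_swc //; try lia.
          by apply/eqP => E; move: hps; rewrite -E ha2 eqxx.
        by apply/eqP => E; move: hsp1; rewrite -E ha2 eqxx.
      move=> t ht; rewrite /w' L_sw //; try lia.
      rewrite /tp; case: ifP => _; first exact: hsp1.
      case: ifP => _; first exact: hps.
      by apply: ha3.
    rewrite Ea'.
    have hane : a != p by apply: contraNneq hps => <-; rewrite ha2.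
    have hane1 : a != p.+1 by apply: contraNneq hsp1 => <-; rewrite ha2.
    case: (ltnP a p) => hap2.
    * case: p hp hp1 hlt hsp hsp1 hps hap hane hane1 hap2 @w' Emn EinL Ea' => [//|p] hp hp1 hlt hsp hsp1 hps hap hane hane1 hap2 w' Emn EinL Ea'.
      rewrite /w' M_sw_mid //; try lia.
      have -> : (q^-1) ^+ (j.-1 - a) *: e (sw p (M w a j.-1)) - q *: ((q^-1) ^+ (j.-1 - a) *: e (M w a j.-1))
          = (q^-1) ^+ (j.-1 - a) *: relS q p (M w a j.-1).
        rewrite relS_eq; last by lia.
        rewrite !L_M //; try lia.
        rewrite (_ : mvf a j.-1 p = p.+1); last by natif.
        rewrite (_ : mvf a j.-1 p.+1 = p.+2); last by natif.
        rewrite hlt; vec.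
      by apply: memvZ; apply: memS; lia.
    * rewrite /w' M_sw_hi //; try lia.
      have -> : (q^-1) ^+ (j.-1 - a) *: e (sw p (M w a j.-1)) - q *: ((q^-1) ^+ (j.-1 - a) *: e (M w a j.-1))
          = (q^-1) ^+ (j.-1 - a) *: relS q p (M w a j.-1).
        rewrite relS_eq // !L_M //; try lia.
        rewrite (_ : mvf a j.-1 p = p); last by natif.
        rewrite (_ : mvf a j.-1 p.+1 = p.+1); last by natif.
        rewrite hlt; vec.
      by apply: memvZ; apply: memS; lia.
-
  move=> hp hpd; have hp1 : (p.+1 < d)%N by lia.
  rewrite relL_eq //.
  have Emn : mn (sw p w) = mn w by rewrite mn_sw.
  have EinL : inL j (sw p w) = inL j w.
    apply/inLP/inLP => [[k hk ek]|[k hk ek]]; exists (tp p k).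
    + by move: hk; rewrite /tp; repeat case: ifP; lia.
    + rewrite -Emn -ek L_sw //; lia.
    + by move: hk; rewrite /tp; repeat case: ifP; lia.
    + rewrite Emn -ek L_sw; [|lia|move: hk; rewrite /tp; repeat case: ifP; lia].
      by congr (L w _); rewrite /tp; repeat case: ifP; lia.
  have Epos : pos j (sw p w) = pos j w.
    rewrite /pos Emn; apply: lastpos_ext => t ht; rewrite L_swc //; lia.
  case: ifP => hlt.
  + rewrite (linD (H_lin j)) (linZ (H_lin j)) !H_e /Hb EinL Epos.
    case: ifP => hin; first by rewrite scaler0 addr0 mem0v.
    have [ha1 ha2 ha3] := pos_spec (negbT hin).
    set a := pos j w in ha1 ha2 ha3 *.
    rewrite M_sw_lo //; try lia.
    have -> : (q^-1) ^+ (j.-1 - a) *: e (sw p (M w a j.-1)) + q^-1 *: ((q^-1) ^+ (j.-1 - a) *: e (M w a j.-1))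
        = (q^-1) ^+ (j.-1 - a) *: relL q p (M w a j.-1).
      rewrite relL_eq // !L_M //; try lia.
      rewrite (_ : mvf a j.-1 p = p); last by natif.
      rewrite (_ : mvf a j.-1 p.+1 = p.+1); last by natif.
      rewrite hlt; vec.
    by apply: memvZ; apply: memL; lia.
  + case: ifP => heq; last by rewrite lin0 ?mem0v //; exact: H_lin.
    rewrite H_e /Hb; case: ifP => hin; first exact: mem0v.
    have [ha1 ha2 ha3] := pos_spec (negbT hin).
    set a := pos j w in ha1 ha2 ha3 *.
    have -> : e (M w a j.-1) = relL q p (M w a j.-1).
      rewrite relL_eq // !L_M //; try lia.
      rewrite (_ : mvf a j.-1 p = p); last by natif.
      rewrite (_ : mvf a j.-1 p.+1 = p.+1); last by natif.
      by rewrite hlt heq.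
    by apply: memvZ; apply: memL; lia.
Qed.


Definition T (i : nat) (v : V) : V := if i is i'.+1 then kappa i' (H i v) else 0.

Lemma T_lin i : lin (T i).
Proof.
case: i => [|i] a x y /=; first by rewrite scaler0 addr0.
by rewrite (H_lin i.+1) (kappa_lin i).
Qed.

Lemma rearr (x y z w : V) (a : K) : x - a *: (y + z) - w = (x - a *: y) - (a *: z + w).
Proof. by rewrite scalerDr !opprD !addrA. Qed.

Lemma H3 i u : (i < d)%N -> incr i u ->
  e u - T i (e u) - H i.+1 (kappa i (e u)) \in U i.
Proof.
move=> hid hu.
rewrite kappa_inc // (lin_sum (H_lin i.+1)).
under eq_bigr => k _ do rewrite (linZ (H_lin i.+1)) H_e.
have hdi : (0 < d - i)%N by lia.
case: (boolP (inL i u)) => hin.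
-
  have hui : L u i = mn u.
    case/inLP: hin => k /andP [hk1 hk2] ek.
    case: (ltngtP i k) => hik; last by rewrite hik.
    + have := hu _ _ (leqnn i) hik hk2; have := mn_le u (ltnW (leq_ltn_trans hik hk2)); lia.
    + lia.
  have T0 : T i (e u) = 0.
    by case: i hid hu hdi hin hui => [//|i] hid hu hdi hin hui; rewrite /T H_e /Hb hin lin0 //; exact: kappa_lin.
  have hnin : ~~ inL i.+1 u.
    apply/inLP => [[k /andP [hk1 hk2] ek]].
    have := hu i k (leqnn i) hk1 hk2; rewrite ek hui; lia.
  have Epos : pos i.+1 u = i.
    by apply: lastpos_eq => // t ht; lia.
  rewrite big_ltn // rot0 // /Hb (negbTE hnin) Epos M_id // subnn expr0 scale1r.
  rewrite big_nat_cond big1 ?addr0; last first.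
    move=> k /andP [/andP [hk1 hk2] _]; rewrite /Hb.
    have -> : inL i.+1 (rot i k u).
      apply/inLP; exists i.+1; first by apply/andP; split => //; lia.
      rewrite L_rot; try lia.
      rewrite (_ : rtf i k i.+1 = i); last by natif.
      have hik : (i + k < d)%N by lia.
      by rewrite mn_rot // hui.
    by rewrite scaler0.
  by rewrite T0 expr0 scale1r subr0 subrr mem0v.
-
  case: i hid hu hdi hin => [|i] hid hu hdi hin.
    by have [k] := notinL_ex hin.
  have [ha1 ha2 ha3] := pos_spec hin.
  set a := pos i.+1 u in ha1 ha2 ha3 *.
  have hai : (a <= i)%N by lia.
  set sg := M u a i.
  have Lsg : forall x, (i <= x)%N -> (x < d)%N -> L sg x = if x == i then mn u else L u x.
    move=> x hx1 hx2; rewrite /sg L_M //; try lia.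
    case: ifP => hx; first by rewrite (eqP hx) (_ : mvf a i i = a) //; natif.
    by rewrite (_ : mvf a i x = x) //; natif.
  have hsg : incr i sg.
    move=> x y hx hxy hy; rewrite !Lsg //; try lia.
    rewrite (_ : (y == i) = false); last by apply/negbTE; lia.
    case: ifP => hxi; first by apply: (notinL_gt hin); lia.
    by apply: hu; lia.
  rewrite /T H_e [Hb i.+1 u]/Hb (negbTE hin) -/a [i.+1.-1]/= -/sg (linZ (kappa_lin i)) kappa_inc //.
  rewrite (_ : (d - i = (d - i.+1).+1)%N); last by lia.
  rewrite big_nat_recl // rot0; last by lia.
  set X := (q^-1) ^+ (i - a).
  have Eb : forall k, (k < d - i.+1)%N ->
      Hb i.+2 (rot i.+1 k u) = (q^-1 * X) *: e (rot i k.+1 sg).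
    move=> k hk; rewrite /Hb.
    have hnin : inL i.+2 (rot i.+1 k u) = false.
      apply/negbTE/inLP => [[t /andP [ht1 ht2] et]].
      move: et; rewrite L_rot //; try lia.
      rewrite mn_rot; last by lia.
      move=> et; have : (mn u < L u (rtf i.+1 k t))%N by apply: (notinL_gt hin); natif.
      by rewrite et ltnn.
    rewrite hnin.
    have Ep : pos i.+2 (rot i.+1 k u) = a.
      rewrite /pos mn_rot; last by lia.
      apply: lastpos_eq; first by lia.
        have E : rtf i.+1 k a = a by natif.
        by rewrite L_rot ?E //; lia.
      move=> t /andP [ht1 ht2]; rewrite L_rot //; try lia.
      case: (ltnP t i.+1) => hti.
        by rewrite (_ : rtf i.+1 k t = t); [apply: ha3; lia | natif].
      rewrite (_ : rtf i.+1 k t = (i.+1 + k)%N); last by natif.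
      have hgt : (mn u < L u (i.+1 + k))%N by apply: (notinL_gt hin); lia.
      by rewrite neq_ltn hgt orbT.
    rewrite Ep M_rot //; last by lia.
    rewrite [i.+2.-1]/= (_ : (i.+1 - a = (i - a).+1)%N); last by lia.
    by rewrite exprS.
  have ES : \sum_(0 <= k < d - i.+1) (- q^-1) ^+ k *: Hb i.+2 (rot i.+1 k u)
      = \sum_(0 <= k < d - i.+1) (- q^-1) ^+ k *: ((q^-1 * X) *: e (rot i k.+1 sg)).
    by apply: eq_big_nat => k hk; rewrite Eb //; lia.
  rewrite ES expr0 scale1r rearr.
  have -> : X *: \sum_(0 <= k < d - i.+1) (- q^-1) ^+ k.+1 *: e (rot i k.+1 sg)
     + \sum_(0 <= k < d - i.+1) (- q^-1) ^+ k *: ((q^-1 * X) *: e (rot i k.+1 sg)) = 0.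
    rewrite scaler_sumr -big_split big1 // => k _ /=.
    rewrite !scalerA -scalerDl exprS.
    have -> : X * (- q^-1 * (- q^-1) ^+ k) + (- q^-1) ^+ k * (q^-1 * X) = 0 by field.
    by rewrite scale0r.
  rewrite subr0 /sg /X; apply: move_S; try lia.
  move=> t /andP [ht1 ht2]; rewrite ha2 ltn_neqAle mn_le ?andbT; last by lia.
  by rewrite eq_sym; apply: ha3; lia.
Qed.


Definition mu (w : W) : nat := (\sum_(0 <= k < d) (d - k) * L w k)%N.

Lemma mu_split w p : (p.+1 < d)%N ->
  (mu w = \sum_(0 <= k < p) (d - k) * L w k + ((d - p) * L w p + ((d - p.+1) * L w p.+1
          + \sum_(p.+2 <= k < d) (d - k) * L w k)))%N.
Proof.
move=> hp; rewrite /mu (@big_cat_nat _ _ _ p) //=; last by lia.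
by rewrite (@big_ltn _ _ _ p) //; [rewrite (@big_ltn _ _ _ p.+1) | lia].
Qed.

Lemma mu_sw p w : (p.+1 < d)%N -> (L w p.+1 < L w p)%N -> (mu (sw p w) < mu w)%N.
Proof.
move=> hp hlt; rewrite !(mu_split _ hp) L_swa // L_swb //.
have E1 : (\sum_(0 <= k < p) (d - k) * L (sw p w) k = \sum_(0 <= k < p) (d - k) * L w k)%N.
  by apply: eq_big_nat => k hk; rewrite L_swc //; lia.
have E2 : (\sum_(p.+2 <= k < d) (d - k) * L (sw p w) k = \sum_(p.+2 <= k < d) (d - k) * L w k)%N.
  by apply: eq_big_nat => k hk; rewrite L_swc //; lia.
rewrite E1 E2.
have : ((d - p) * L w p.+1 + (d - p.+1) * L w p < (d - p) * L w p + (d - p.+1) * L w p.+1)%N.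
  have -> : (d - p = (d - p.+1).+1)%N by lia.
  nia.
lia.
Qed.

Lemma incr_adj i w : (forall p, (i <= p)%N -> (p.+1 < d)%N -> (L w p < L w p.+1)%N) -> incr i w.
Proof.
move=> H a b ha hab hb; elim: b hab hb => [//|b IH] hab hb.
case: (eqVneq a b) => [->|hne]; first by apply: H; lia.
have h1 := IH (_ : (a < b)%N) (_ : (b < d)%N); have h2 := H b (_ : (i <= b)%N) hb.
have : (L w a < L w b)%N by apply: h1; lia.
have : (L w b < L w b.+1)%N by apply: h2; lia.
lia.
Qed.

Definition g (i : nat) (v : V) : V := v - T i v - H i.+1 (kappa i v).

Lemma g_lin i : lin (g i).
Proof.
move=> a x y; rewrite /g (T_lin i) (kappa_lin i) (H_lin i.+1).
apply/ffunP => ?; rewrite !ffunE !scK; ring.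
Qed.

Lemma gU i z : (i < d)%N -> z \in U i -> g i z \in U i.
Proof.
move=> hid hz; rewrite /g; apply: memvB; first apply: memvB => //.
- case: i hid hz => [|i] hid hz; first exact: mem0v.
  rewrite /T; apply: W1; first by lia.
  by apply: H1 => //; lia.
- by apply: H1 => //; apply: W1.
Qed.

Lemma G i v : (i < d)%N -> g i v \in U i.
Proof.
move=> hid; rewrite (lin_decomp v (g_lin i)); apply: memv_suml => w _; apply: memvZ.
have main : forall N (w : W), (mu w < N)%N -> g i (e w) \in U i.
  elim=> [//|N IH] {}w hw.
  case: (boolP (all (fun p => L w p < L w p.+1)%N (iota i (d.-1 - i)))) => hall.
  - have hinc : incr i w.
      apply: incr_adj => p h1 h2; move/allP: hall; apply; rewrite mem_iota; lia.
    exact: H3.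
  - case/allPn: hall => p; rewrite mem_iota => hp hle.
    have hp1 : (p.+1 < d)%N by lia.
    have hp2 : (i <= p)%N by lia.
    case: (ltngtP (L w p) (L w p.+1)) hle => // h _.
    +
      have Ew : e w = relL q p (sw p w) - q^-1 *: e (sw p w).
        rewrite relL_eq // L_swa // L_swb // h swK //; apply/ffunP => ?; rewrite !ffunE !scK; ring.
      rewrite Ew (linB (g_lin i)) (linZ (g_lin i)); apply: memvB.
      * by apply: gU => //; apply: memL; lia.
      * apply: memvZ; apply: IH; have := mu_sw hp1 h; lia.
    +
      have Ew : e w = relL q p w by rewrite relL_eq // h ltnn eqxx.
      by rewrite Ew; apply: gU => //; apply: memL; lia.
exact: (main (mu w).+1).
Qed.

Lemma kappa_img_mem j x : kappa j x \in kappa_img q n d j.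
Proof.
rewrite (lin_decomp x (kappa_lin j)); apply: memv_suml => w _; apply: memvZ.
by apply: memv_span; apply: map_f; rewrite mem_enum.
Qed.

Lemma exact_at i : (i <= d)%N -> koszul_exact_at q n d i.
Proof.
move=> hid v.
case: (ltnP i d) => hi /=.
- apply/idP/idP => [hk|].
  + have hG := G v hi; have hH : H i.+1 (kappa i v) \in U i by apply: H1 => //.
    have hv : v - T i v \in U i.
      by have := memvD hG hH; rewrite subrK.
    case: i hid hi hk hG hH hv => [|i] hid hi hk hG hH hv; first by rewrite /T subr0 in hv.
    have -> : v = T i.+1 v + (v - T i.+1 v) by rewrite addrC subrK.
    apply/memv_addP; exists (T i.+1 v); first exact: kappa_img_mem.
    by exists (v - T i.+1 v).
  + case: i hid hi => [|i] hid hi; first exact: W1.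
    move/memv_addP => [y hy [z hz ->]]; rewrite (linD (kappa_lin i.+1)); apply: memvD; last exact: W1.
    apply: (span_lin (kappa_lin i.+1) _ hy) => x /mapP [w _ ->].
    by apply: W2.
- have hdi : i = d by lia.
  case: i hid hi hdi => [|i] hid hi hdi; first by lia.
  apply/esym; apply: (subvP (addvSl _ _)).
  have -> : v = kappa i v.
    rewrite kappaE (_ : (d - i = 1)%N); last by lia.
    by rewrite big_nat1 expr0 scale1r.
  exact: kappa_img_mem.
Qed.

End Q.
End Main.

Theorem proposition5p4 (K : fieldType) (l : nat) (q : K) :
  odd l -> (1 < l)%N -> l.-primitive_root q ->
  forall d : nat, (1 <= d)%N ->
  forall n : nat, forall i : nat, (i <= d)%N -> koszul_exact_at q n d i.
Proof.
move=> hodd hl hprim d hd n i hid.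
have hql : q ^+ l = 1 by apply/eqP; rewrite -(prim_order_dvd hprim) dvdnn.
have qnz : q != 0.
  have hl0 : (0 < l)%N by lia.
  apply/eqP => h; move: hql; rewrite h expr0n (gtn_eqF hl0) /= => /eqP.
  by rewrite eq_sym oner_eq0.
have qq : q + q^-1 != 0.
  apply/eqP => h.
  have h2 : q * q = -1.
    have : q * (q + q^-1) = 0 by rewrite h mulr0.
    by rewrite mulrDr mulfV // => /eqP; rewrite addr_eq0 => /eqP.
  have h4 : q ^+ 4 = 1 by rewrite (_ : 4%N = (2 * 2)%N) // exprM (expr2 q) h2 sqrrN expr1n.
  have : (l %| 4)%N by rewrite (prim_order_dvd hprim) h4.
  by move: hodd hl; case: l {hprim hql} => [|[|[|[|[|l]]]]].
exact: (exact_at qnz qq hd hid).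
Qed.
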